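(* Let $\mathbb K$ be a field with $2\in\mathbb K^\times$, $A$ a unital commutative associative $\mathbb K$-algebra, $\mathfrak k$ a $\mathbb K$-Lie algebra, $\mathfrak g=A\otimes\mathfrak k$ and $\mathfrak z$ a vector space. For $i\in\{1,2,3\}$ and a linear map $f_i$ on the $i$-th summand, $f=f_i\circ p_i$ is a 2-cocycle if and only if: ($i=1$) every $\tilde f_1(a,b)$ is an invariant symmetric bilinear map $\mathfrak k\times\mathfrak k\to\mathfrak z$, and the induced alternating map $A\times A\to\mathrm{Lin}(\mathfrak k\vee\mathfrak k',\mathfrak z)^{\mathfrak k}$, $(a,b)\mapsto\tilde f_1(a,b)|_{\mathfrak k\vee\mathfrak k'}$, is a cyclic 1-cocycle; ($i=2$) $\tilde f_2(A)\subseteq Z^2(\mathfrak k,\mathfrak z)$; ($i=3$) $\tilde f_3(c)(x,y)=0$ for all $c\in I_A$, $x\in\mathfrak k$, $y\in\mathfrak k'$.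
   Context: $\mathfrak g$ has bracket $[a\otimes x,a'\otimes x']=aa'\otimes[x,x']$, $ax=a\otimes x$, unit $\mathbf 1$, $\mathfrak k'=[\mathfrak k,\mathfrak k]$. $v\wedge w=\tfrac12(v\otimes w-w\otimes v)$, $v\vee w=\tfrac12(v\otimes w+w\otimes v)$. $I_A$ is the kernel of multiplication $S^2(A)\to A$. The $i$-th summands are $\Lambda^2(A)\otimes S^2(\mathfrak k)$, $A\otimes\Lambda^2(\mathfrak k)$, $I_A\otimes\Lambda^2(\mathfrak k)$, with projections $p_1(ax\wedge by)=a\wedge b\otimes x\vee y$, $p_2(ax\wedge by)=ab\otimes x\wedge y$, $p_3(ax\wedge by)=(a\vee b-ab\vee\mathbf 1)\otimes x\wedge y$ (together an isomorphism from $\Lambda^2(\mathfrak g)$ onto the direct sum). A 2-cocycle is a linear map on $\Lambda^2(\mathfrak g)$ vanishing on the span of $[u,v]\wedge w+[v,w]\wedge u+[w,u]\wedge v$. $\tilde f_1(a,b)(x,y)=f_1(a\wedge b\otimes x\vee y)$, $\tilde f_2(a)(x,y)=f_2(a\otimes x\wedge y)$, $\tilde f_3(c)(x,y)=f_3(c\otimes x\wedge y)$. Invariance: $\kappa([x,y],z)=\kappa(x,[y,z])$. $\mathfrak k\vee\mathfrak k'$ is the span of $x\vee y$, $x\in\mathfrak k$, $y\in\mathfrak k'$; $\mathrm{Lin}(\mathfrak k\vee\mathfrak k',\mathfrak z)^{\mathfrak k}$ the $\mathfrak k$-invariant linear maps on it. A cyclic 1-cocycle is an alternating bilinear $\phi$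 on $A$ with $\phi(a,bc)+\phi(b,ca)+\phi(c,ab)=0$. $Z^2(\mathfrak k,\mathfrak z)$ is the space of alternating bilinear $\eta:\mathfrak k\times\mathfrak k\to\mathfrak z$ with $\eta([x,y],z)+\eta([y,z],x)+\eta([z,x],y)=0$. *)

(* Defs.v *)
From HB Require Import structures.
From mathcomp Require Import all_boot all_order all_algebra.
Set Implicit Arguments. Unset Strict Implicit. Unset Printing Implicit Defensive.
Import Order.TTheory GRing.Theory Num.Theory.
Local Open Scope ring_scope.

Section Defs.
Variable K : fieldType.

Definition bilin (U V W : lmodType K) (h : U -> V -> W) : Prop :=
  (forall u, linear (h u)) /\ (forall v, linear (fun u => h u v)).

Definition in_span (V : lmodType K) (S : V -> Prop) (x : V) : Prop :=
  exists (n : nat) (c : 'I_n -> K) (e : 'I_n -> V),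
    (forall i, S (e i)) /\ x = \sum_(i < n) c i *: e i.

Definition is_tensor (U V T : lmodType K) (t : U -> V -> T) : Prop :=
  bilin t /\
  forall (W : lmodType K) (h : U -> V -> W), bilin h ->
    exists! phi : T -> W, linear phi /\ forall u v, phi (t u v) = h u v.

Definition is_ext_square (U E : lmodType K) (w : U -> U -> E) : Prop :=
  bilin w /\ (forall u v, w u v = - w v u) /\
  forall (W : lmodType K) (h : U -> U -> W), bilin h ->
    (forall u v, h u v = - h v u) ->
    exists! phi : E -> W, linear phi /\ forall u v, phi (w u v) = h u v.

Definition is_sym_square (U S : lmodType K) (s : U -> U -> S) : Prop :=
  bilin s /\ (forall u v, s u v = s v u) /\
  forall (W : lmodType K) (h : U -> U -> W), bilin h ->
    (forall u v, h u v = h v u) ->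
    exists! phi : S -> W, linear phi /\ forall u v, phi (s u v) = h u v.

Definition is_lie_bracket (L : lmodType K) (br : L -> L -> L) : Prop :=
  bilin br /\ (forall x, br x x = 0) /\
  (forall x y z, br x (br y z) + br y (br z x) + br z (br x y) = 0).

Definition derived (L : lmodType K) (br : L -> L -> L) (y : L) : Prop :=
  in_span (fun e => exists x x', e = br x x') y.

Definition lie_invariant (L Z : lmodType K) (br : L -> L -> L) (kappa : L -> L -> Z) :=
  forall x y z, kappa (br x y) z = kappa x (br y z).

Definition Z2 (L Z : lmodType K) (br : L -> L -> L) (eta : L -> L -> Z) : Prop :=
  bilin eta /\ (forall x y, eta x y = - eta y x) /\
  (forall x y z, eta (br x y) z + eta (br y z) x + eta (br z x) y = 0).

Definition is_2cocycle (G E Z : lmodType K) (brG : G -> G -> G)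
    (wg : G -> G -> E) (f : E -> Z) : Prop :=
  linear f /\
  forall e, in_span (fun e' => exists u v w,
      e' = wg (brG u v) w + wg (brG v w) u + wg (brG w u) v) e -> f e = 0.

(** Cyclic 1-cocycle  phi : A x A -> Lin(P, z), where the values
    [phi a b : V -> Z] are compared as maps restricted to the subspace [P]
    (two linear maps on a subspace agree iff they agree on its elements). *)
Definition cyclic_1cocycle_on (A : comAlgType K) (V Z : lmodType K)
    (P : V -> Prop) (phi : A -> A -> V -> Z) : Prop :=
  (forall (c : K) a a' b s, P s ->
      phi (c *: a + a') b s = c *: phi a b s + phi a' b s) /\
  (forall (c : K) a b b' s, P s ->
      phi a (c *: b + b') s = c *: phi a b s + phi a b' s) /\
  (forall a b s, P s -> phi a b s = - phi b a s) /\
  (forall a b c s, P s -> phi a (b * c) s + phi b (c * a) s + phi c (a * b) s = 0).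

End Defs.

(* Main.v *)
Require Import Defs.
From HB Require Import structures.
From mathcomp Require Import all_boot all_order all_algebra.
Import GRing.Theory.
Local Open Scope ring_scope.
Set Implicit Arguments. Unset Strict Implicit.

Lemma linD (K : fieldType) (U V : lmodType K) (f : U -> V) :
  linear f -> forall u v, f (u + v) = f u + f v.
Proof. by move=> Hf u v; rewrite -[u in LHS]scale1r Hf scale1r. Qed.

Lemma lin0 (K : fieldType) (U V : lmodType K) (f : U -> V) :
  linear f -> f 0 = 0.
Proof. move=> Hf; have: f 0 + f 0 = f 0 + 0 by rewrite -linD // !addr0.
exact: addrI. Qed.

Lemma linZ (K : fieldType) (U V : lmodType K) (f : U -> V) :
  linear f -> forall a u, f (a *: u) = a *: f u.
Proof. by move=> Hf a u; rewrite -[a *: u]addr0 Hf lin0 // addr0. Qed.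

Lemma linN (K : fieldType) (U V : lmodType K) (f : U -> V) :
  linear f -> forall u, f (- u) = - f u.
Proof. by move=> Hf u; rewrite -scaleN1r linZ // scaleN1r. Qed.

Lemma linB (K : fieldType) (U V : lmodType K) (f : U -> V) :
  linear f -> forall u v, f (u - v) = f u - f v.
Proof. by move=> Hf u v; rewrite linD // linN. Qed.

Lemma lin_span0 (K : fieldType) (U V : lmodType K) (f : U -> V) (S : U -> Prop) :
  linear f -> (forall e, S e -> f e = 0) -> forall x, in_span S x -> f x = 0.
Proof.
move=> Hf HS x [n [c [e [He ->]]]].
elim: n c e He => [|n IH] c e He; first by rewrite big_ord0 lin0.
rewrite big_ord_recr /= linD // linZ // (HS _ (He _)) scaler0 addr0.
exact: (IH (fun i => c (widen_ord (leqnSn n) i)) (fun i => e (widen_ord (leqnSn n) i))).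
Qed.

Lemma in_span1 (K : fieldType) (U : lmodType K) (S : U -> Prop) x : S x -> in_span S x.
Proof.
move=> Sx; exists 1%N, (fun _ => 1), (fun _ => x); split => // .
by rewrite big_ord1 scale1r.
Qed.

Lemma lin_comp (K : fieldType) (U V W : lmodType K) (f : U -> V) (g : V -> W) :
  linear f -> linear g -> linear (fun u => g (f u)).
Proof. by move=> Hf Hg a u v /=; rewrite Hf Hg. Qed.

Lemma lin_add (K : fieldType) (U V : lmodType K) (f g : U -> V) :
  linear f -> linear g -> linear (fun u => f u + g u).
Proof. move=> Hf Hg a u v /=; rewrite Hf Hg scalerDr.
by rewrite -!addrA; congr (_ + _); rewrite addrCA. Qed.

Lemma tensor_zero (K : fieldType) (U V T W : lmodType K) (t : U -> V -> T) (phi : T -> W) :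
  is_tensor t -> linear phi -> (forall u v, phi (t u v) = 0) -> forall x, phi x = 0.
Proof.
move=> [_ HT] Hphi H0 x.
have hb : bilin (fun (_ : U) (_ : V) => (0 : W)).
  by split => ? a ? ?; rewrite scaler0 addr0.
have [phi0 [_ Hu]] := HT W _ hb.
have e1 := Hu phi (conj Hphi H0).
have l0 : linear (fun _ : T => (0 : W)) by move=> a u v; rewrite scaler0 addr0.
have e2 := Hu (fun _ => 0) (conj l0 (fun u v => erefl)).
by have := congr1 (fun g => g x) (etrans (esym e1) e2).
Qed.

Lemma sym_zero (K : fieldType) (U S W : lmodType K) (s : U -> U -> S) (phi : S -> W) :
  is_sym_square s -> linear phi -> (forall u v, phi (s u v) = 0) -> forall x, phi x = 0.
Proof.
move=> [_ [_ HT]] Hphi H0 x.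
have hb : bilin (fun (_ : U) (_ : U) => (0 : W)).
  by split => ? a ? ?; rewrite scaler0 addr0.
have [phi0 [_ Hu]] := HT W _ hb (fun _ _ => erefl).
have e1 := Hu phi (conj Hphi H0).
have l0 : linear (fun _ : S => (0 : W)) by move=> a u v; rewrite scaler0 addr0.
have e2 := Hu (fun _ => 0) (conj l0 (fun u v => erefl)).
by have := congr1 (fun g => g x) (etrans (esym e1) e2).
Qed.

Definition cyc (K : fieldType) (G E : lmodType K) (brG : G -> G -> G) (wg : G -> G -> E) u v w :=
  wg (brG u v) w + wg (brG v w) u + wg (brG w u) v.

Lemma cyc_rot (K : fieldType) (G E : lmodType K) (brG : G -> G -> G) (wg : G -> G -> E) u v w :
  cyc brG wg u v w = cyc brG wg v w u.
Proof. by rewrite /cyc [RHS]addrC addrA. Qed.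

Lemma cyc_lin (K : fieldType) (G E Z : lmodType K) (brG : G -> G -> G) (wg : G -> G -> E)
  (f : E -> Z) : bilin brG -> bilin wg -> linear f ->
  forall v w, linear (fun u => f (cyc brG wg u v w)).
Proof.
move=> [B1 B2] [W1 W2] Hf v w; apply: lin_comp Hf.
apply: lin_add; first apply: lin_add.
- exact: (lin_comp (B2 v) (W2 w)).
- exact: (W1 _).
- exact: (lin_comp (B1 w) (W2 v)).
Qed.

Lemma cocycle_gens (K : fieldType) (A k G E Z : lmodType K) (tg : A -> k -> G)
  (brG : G -> G -> G) (wg : G -> G -> E) (f : E -> Z) :
  is_tensor tg -> bilin brG -> bilin wg -> linear f ->
  (forall a x b y c z, f (cyc brG wg (tg a x) (tg b y) (tg c z)) = 0) ->
  is_2cocycle brG wg f.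
Proof.
move=> HG HB HW Hf H; split => //.
have Q1 v w : (forall a x, f (cyc brG wg (tg a x) v w) = 0) -> forall u, f (cyc brG wg u v w) = 0.
  by move=> h; apply: (tensor_zero HG (cyc_lin HB HW Hf v w)).
have Hall u v w : f (cyc brG wg u v w) = 0.
  apply: (Q1) => a x; rewrite -cyc_rot.
  apply: (Q1) => c z; rewrite -cyc_rot.
  apply: (Q1) => b y; rewrite -cyc_rot; exact: H.
apply: lin_span0 Hf _ => e [u [v [w ->]]]; exact: Hall.
Qed.

Lemma cocycle_use (K : fieldType) (G E Z : lmodType K)
  (brG : G -> G -> G) (wg : G -> G -> E) (f : E -> Z) :
  is_2cocycle brG wg f -> forall u v w, f (cyc brG wg u v w) = 0.
Proof. by move=> [_ H] u v w; apply: H; apply: in_span1; exists u, v, w. Qed.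

From mathcomp Require Import ring.

Lemma bilin_comp (K : fieldType) (U V W X : lmodType K) (w : U -> V -> W) (g : W -> X) :
  bilin w -> linear g -> bilin (fun x y => g (w x y)).
Proof. by move=> [W1 W2] Hg; split => [u|v]; apply: lin_comp. Qed.

Lemma part2 (K : fieldType) (A : comAlgType K) (k : lmodType K) (br : k -> k -> k)
  (Z : lmodType K) (G : lmodType K) (tg : A -> k -> G) (HG : is_tensor tg)
  (brG : G -> G -> G) (HbrG1 : bilin brG)
  (HbrG2 : forall a x b y, brG (tg a x) (tg b y) = tg (a * b) (br x y))
  (E : lmodType K) (wg : G -> G -> E) (HE : is_ext_square wg)
  (Lk : lmodType K) (wk : k -> k -> Lk) (HLk : is_ext_square wk)
  (T2 : lmodType K) (t2 : A -> Lk -> T2) (HT2 : is_tensor t2)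
  (p2 : E -> T2) (Hp2a : linear p2)
  (Hp2b : forall a x b y, p2 (wg (tg a x) (tg b y)) = t2 (a * b) (wk x y)) :
  forall f2 : T2 -> Z, linear f2 ->
     (is_2cocycle brG wg (fun e => f2 (p2 e)) <->
      (forall a : A, Z2 br (fun x y => f2 (t2 a (wk x y))))).
Proof.
move=> f2 Hf2.
have comp a x b y c z : f2 (p2 (cyc brG wg (tg a x) (tg b y) (tg c z))) =
   f2 (t2 (a*b*c) (wk (br x y) z)) + f2 (t2 (a*b*c) (wk (br y z) x)) + f2 (t2 (a*b*c) (wk (br z x) y)).
  rewrite /cyc !HbrG2 !(linD Hp2a) !Hp2b !(linD Hf2).
  have -> : b * c * a = a * b * c by ring.
  by have -> : c * a * b = a * b * c by ring.
split.
- move=> Hc a; split; first exact: (bilin_comp HLk.1 (lin_comp (HT2.1.1 a) Hf2)).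
  split; first by move=> x y; rewrite HLk.2.1 (linN (HT2.1.1 a)) (linN Hf2).
  move=> x y z; have := cocycle_use Hc (tg a x) (tg 1 y) (tg 1 z).
  by rewrite comp !mulr1.
- move=> H; apply: (cocycle_gens HG HbrG1 HE.1 (lin_comp Hp2a Hf2)).
  move=> a x b y c z; rewrite comp; exact: (H (a*b*c)).2.2.
Qed.

From Stdlib Require Import ClassicalEpsilon.

Section BilinLemmas.
Lemma bilD1 (K : fieldType) (U V W : lmodType K) (w : U -> V -> W) :
  bilin w -> forall u u' v, w (u + u') v = w u v + w u' v.
Proof. by move=> [_ H] u u' v; exact: (linD (H v)). Qed.
Lemma bilD2 (K : fieldType) (U V W : lmodType K) (w : U -> V -> W) :
  bilin w -> forall u v v', w u (v + v') = w u v + w u v'.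
Proof. by move=> [H _] u v v'; exact: (linD (H u)). Qed.
Lemma bilZ1 (K : fieldType) (U V W : lmodType K) (w : U -> V -> W) :
  bilin w -> forall a u v, w (a *: u) v = a *: w u v.
Proof. by move=> [_ H] a u v; exact: (linZ (H v)). Qed.
Lemma bilZ2 (K : fieldType) (U V W : lmodType K) (w : U -> V -> W) :
  bilin w -> forall a u v, w u (a *: v) = a *: w u v.
Proof. by move=> [H _] a u v; exact: (linZ (H u)). Qed.
Lemma bilN1 (K : fieldType) (U V W : lmodType K) (w : U -> V -> W) :
  bilin w -> forall u v, w (- u) v = - w u v.
Proof. by move=> [_ H] u v; exact: (linN (H v)). Qed.
Lemma bilN2 (K : fieldType) (U V W : lmodType K) (w : U -> V -> W) :
  bilin w -> forall u v, w u (- v) = - w u v.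
Proof. by move=> [H _] u v; exact: (linN (H u)). Qed.
Lemma bil01 (K : fieldType) (U V W : lmodType K) (w : U -> V -> W) :
  bilin w -> forall v, w 0 v = 0.
Proof. by move=> [_ H] v; exact: (lin0 (H v)). Qed.
Lemma bil02 (K : fieldType) (U V W : lmodType K) (w : U -> V -> W) :
  bilin w -> forall u, w u 0 = 0.
Proof. by move=> [H _] u; exact: (lin0 (H u)). Qed.
End BilinLemmas.

Lemma two_cancel (K : fieldType) (Z : lmodType K) : (2 : K) != 0 ->
  forall X : Z, X + X = 0 -> X = 0.
Proof.
move=> h2 X HX; have : (2 : K) *: X = 0 by rewrite scaler_nat mulr2n.
move/(congr1 (fun v => (2 : K)^-1 *: v)); rewrite scalerA mulVf // scale1r => ->.
by rewrite scaler0.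
Qed.

Lemma three_zero (K : fieldType) (Z : lmodType K) : (2 : K) != 0 ->
  forall X Y W : Z, Y + W = 0 -> W + X = 0 -> X + Y = 0 -> X = 0.
Proof.
move=> h2 X Y W h1 h2' h3; apply: (two_cancel h2).
have eY : Y = - X by apply/eqP; rewrite -addr_eq0 addrC h3.
have eW : W = - Y by apply/eqP; rewrite -addr_eq0 addrC h1.
by move: h2'; rewrite eW eY opprK.
Qed.

Lemma derived_br (K : fieldType) (k : lmodType K) (br : k -> k -> k) x y :
  derived br (br x y).
Proof. by apply: in_span1; exists x, y. Qed.

Lemma part3 (K : fieldType) (two_unit : (2 : K) != 0)
  (A : comAlgType K) (k : lmodType K) (br : k -> k -> k)
  (Z : lmodType K) (G : lmodType K) (tg : A -> k -> G) (HG : is_tensor tg)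
  (brG : G -> G -> G) (HbrG1 : bilin brG)
  (HbrG2 : forall a x b y, brG (tg a x) (tg b y) = tg (a * b) (br x y))
  (E : lmodType K) (wg : G -> G -> E) (HE : is_ext_square wg)
  (Lk : lmodType K) (wk : k -> k -> Lk) (HLk : is_ext_square wk)
  (SA : lmodType K) (sA : A -> A -> SA) (HSA : is_sym_square sA)
  (mA : SA -> A) (HmA1 : linear mA) (HmA2 : forall a b, mA (sA a b) = a * b)
  (IA : lmodType K) (iota : IA -> SA) (Hiota1 : linear iota)
  (Hiota2 : injective iota) (Hiota3 : forall s, mA s = 0 <-> exists c, iota c = s)
  (T3 : lmodType K) (t3 : IA -> Lk -> T3) (HT3 : is_tensor t3)
  (p3 : E -> T3) (Hp3a : linear p3)
  (Hp3b : forall a x b y c, iota c = sA a b - sA (a * b) 1 ->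
            p3 (wg (tg a x) (tg b y)) = t3 c (wk x y)) :
  forall f3 : T3 -> Z, linear f3 ->
     (is_2cocycle brG wg (fun e => f3 (p3 e)) <->
      (forall (c : IA) (x y : k), derived br y -> f3 (t3 c (wk x y)) = 0)).
Proof.
move=> f3 Hf3.
have gh : forall s, {c | iota c = s - sA (mA s) 1}.
  move=> s; apply: constructive_indefinite_description; apply/Hiota3.
  by rewrite (linB HmA1) HmA2 mulr1 subrr.
pose gam s := proj1_sig (gh s).
have Hgam s : iota (gam s) = s - sA (mA s) 1 := proj2_sig (gh s).
have Hg a b : iota (gam (sA a b)) = sA a b - sA (a * b) 1 by rewrite Hgam HmA2.
have gam_lin : linear gam.
  move=> a u v; apply: Hiota2; rewrite Hiota1 !Hgam HmA1 (bilD1 HSA.1) (bilZ1 HSA.1).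
  by rewrite scalerBr opprD addrACA.
have comp a x b y c z : f3 (p3 (cyc brG wg (tg a x) (tg b y) (tg c z))) =
   f3 (t3 (gam (sA (a*b) c)) (wk (br x y) z)) + f3 (t3 (gam (sA (b*c) a)) (wk (br y z) x))
   + f3 (t3 (gam (sA (c*a) b)) (wk (br z x) y)).
  by rewrite /cyc !HbrG2 !(linD Hp3a) !(Hp3b _ _ _ _ _ (Hg _ _)) !(linD Hf3).
have lin3 c : linear (fun l => f3 (t3 c l)) := lin_comp (HT3.1.1 c) Hf3.
split.
- move=> Hc.
  have hgen a b x y z : f3 (t3 (gam (sA a b)) (wk (br x y) z)) = 0.
    have H0 x' y' z' : f3 (t3 (gam (sA a b)) (wk (br y' z') x')) +
                       f3 (t3 (gam (sA a b)) (wk (br z' x') y')) = 0.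
      have := cocycle_use Hc (tg a x') (tg b y') (tg 1 z').
      rewrite comp mulr1 mul1r (HSA.2.1 b a).
      have -> : gam (sA (a * b) 1) = 0.
        by apply: Hiota2; rewrite Hg mulr1 subrr (lin0 Hiota1).
      by rewrite (bil01 HT3.1) (lin0 Hf3) add0r.
    exact: (three_zero two_unit (H0 x y z) (H0 y z x) (H0 z x y)).
  have hall c u v x : f3 (t3 c (wk (br u v) x)) = 0.
    have gl : linear (fun s => f3 (t3 (gam s) (wk (br u v) x))).
      exact: (lin_comp gam_lin (lin_comp (HT3.1.2 (wk (br u v) x)) Hf3)).
    have := sym_zero HSA gl (fun a b => hgen a b u v x) (iota c).
    suff -> : gam (iota c) = c by [].
    apply: Hiota2; rewrite Hgam.
    have -> : mA (iota c) = 0 by apply/Hiota3; exists c.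
    by rewrite (bil01 HSA.1) subr0.
  move=> c x y Hy.
  apply: (lin_span0 (lin_comp (HLk.1.1 x) (lin3 c)) _ Hy) => e [u [v ->]].
  by rewrite /= HLk.2.1 (linN (lin3 c)) hall oppr0.
- move=> H; apply: (cocycle_gens HG HbrG1 HE.1 (lin_comp Hp3a Hf3)).
  move=> a x b y c z; rewrite comp.
  rewrite /= !(HLk.2.1 (br _ _)) !(linN (lin3 _)) !H ; try exact: derived_br.
  by rewrite !oppr0 !addr0.
Qed.

Lemma negsum (K : fieldType) (Z : lmodType K) (P Q R : Z) :
  - P - Q - R = 0 <-> R + P + Q = 0.
Proof.
have -> : - P - Q - R = - (R + P + Q) by rewrite addrC addrA -!opprD.
by split; [move/eqP; rewrite oppr_eq0 => /eqP | move=> ->; rewrite oppr0].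
Qed.

Lemma aux_swap (K : fieldType) (Z : lmodType K) : (2 : K) != 0 ->
  forall X Y W : Z, X - Y + W = 0 -> X + Y - W = 0 -> Y = W.
Proof.
move=> h2 X Y W h1 h3.
have eX : X = Y - W.
  by move/eqP: h1; rewrite -addrA addr_eq0 opprD opprK => /eqP.
move: h3; rewrite eX -addrA => /(two_cancel h2) /eqP; by rewrite subr_eq0 => /eqP.
Qed.

Lemma part1 (K : fieldType) (two_unit : (2 : K) != 0)
  (A : comAlgType K) (k : lmodType K) (br : k -> k -> k)
  (Z : lmodType K) (G : lmodType K) (tg : A -> k -> G) (HG : is_tensor tg)
  (brG : G -> G -> G) (HbrG1 : bilin brG)
  (HbrG2 : forall a x b y, brG (tg a x) (tg b y) = tg (a * b) (br x y))
  (E : lmodType K) (wg : G -> G -> E) (HE : is_ext_square wg)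
  (LA : lmodType K) (wA : A -> A -> LA) (HLA : is_ext_square wA)
  (Sk : lmodType K) (sk : k -> k -> Sk) (HSk : is_sym_square sk)
  (T1 : lmodType K) (t1 : LA -> Sk -> T1) (HT1 : is_tensor t1)
  (p1 : E -> T1) (Hp1a : linear p1)
  (Hp1b : forall a x b y, p1 (wg (tg a x) (tg b y)) = t1 (wA a b) (sk x y)) :
  forall f1 : T1 -> Z, linear f1 ->
     (is_2cocycle brG wg (fun e => f1 (p1 e)) <->
      ((forall a b,
          bilin (fun x y => f1 (t1 (wA a b) (sk x y))) /\
          (forall x y, f1 (t1 (wA a b) (sk x y)) = f1 (t1 (wA a b) (sk y x))) /\
          lie_invariant br (fun x y => f1 (t1 (wA a b) (sk x y)))) /\
       cyclic_1cocycle_on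
         (in_span (fun s => exists x y, derived br y /\ s = sk x y))
         (fun a b (s : Sk) => f1 (t1 (wA a b) s)))).
Proof.
move=> f1 Hf1.
pose F a b x y := f1 (t1 (wA a b) (sk x y)).
have comp a x b y c z : f1 (p1 (cyc brG wg (tg a x) (tg b y) (tg c z))) =
   F (a*b) c (br x y) z + F (b*c) a (br y z) x + F (c*a) b (br z x) y.
  by rewrite /cyc !HbrG2 !(linD Hp1a) !Hp1b !(linD Hf1).
have Fanti a b s : f1 (t1 (wA b a) s) = - f1 (t1 (wA a b) s).
  by rewrite HLA.2.1 (bilN1 HT1.1) (linN Hf1).
have Fsym a b x y : F a b x y = F a b y x by rewrite /F HSk.2.1.
have lin_s a b : linear (fun s => f1 (t1 (wA a b) s)) := lin_comp (HT1.1.1 _) Hf1.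
have cyc12 : (forall (c : K) a a' b s,
      f1 (t1 (wA (c *: a + a') b) s) = c *: f1 (t1 (wA a b) s) + f1 (t1 (wA a' b) s)) /\
    (forall (c : K) a b b' s,
      f1 (t1 (wA a (c *: b + b')) s) = c *: f1 (t1 (wA a b) s) + f1 (t1 (wA a b') s)) /\
    (forall a b s, f1 (t1 (wA a b) s) = - f1 (t1 (wA b a) s)).
  split; first by move=> c a a' b s; rewrite (bilD1 HLA.1) (bilZ1 HLA.1) (bilD1 HT1.1)
     (bilZ1 HT1.1) (linD Hf1) (linZ Hf1).
  split; first by move=> c a b b' s; rewrite (bilD2 HLA.1) (bilZ2 HLA.1) (bilD1 HT1.1)
     (bilZ1 HT1.1) (linD Hf1) (linZ Hf1).
  by move=> a b s; rewrite Fanti.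
have Philin a b c : linear (fun s => f1 (t1 (wA a (b*c)) s) + f1 (t1 (wA b (c*a)) s)
      + f1 (t1 (wA c (a*b)) s)).
  by apply: lin_add; first apply: lin_add.
split.
- move=> Hc.
  have inv_aux a b x y z : F a b (br y z) x = F a b (br z x) y.
    have e1 := cocycle_use Hc (tg a x) (tg b y) (tg 1 z).
    have e2 := cocycle_use Hc (tg b x) (tg a y) (tg 1 z).
    rewrite comp !mulr1 !mul1r /F (Fanti a b) -/(F a b _ _) -/(F (a * b) 1 _ _) in e1.
    rewrite comp !mulr1 !mul1r [b * a]mulrC /F (Fanti a b) -/(F a b _ _) -/(F (a * b) 1 _ _) in e2.
    exact: (aux_swap two_unit e1 e2).
  have inv a b : lie_invariant br (fun x y => F a b x y).
    by move=> x y z /=; rewrite (inv_aux a b z x y) Fsym.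
  split.
    move=> a b; split; first exact: (bilin_comp HSk.1 (lin_s a b)).
    by split; [exact: Fsym | exact: inv].
  split; first by move=> ? ? ? ? ? _; apply: cyc12.1.
  split; first by move=> ? ? ? ? ? _; apply: cyc12.2.1.
  split; first by move=> ? ? ? _; apply: cyc12.2.2.
  move=> a b c s Hs.
  apply: (lin_span0 (Philin a b c) _ Hs) => e [x [y [Hy ->]]].
  apply: (lin_span0 (lin_comp (HSk.1.1 x) (Philin a b c)) _ Hy) => e' [u [v ->]] /=.
  have h := cocycle_use Hc (tg a u) (tg b v) (tg c x).
  rewrite comp (inv_aux _ _ u v x) !(inv_aux _ _ v x u) in h.
  rewrite ![sk x _]HSk.2.1 ![f1 (t1 (wA _ (_ * _)) _)]Fanti.
  by apply/negsum.
- move=> [H1 [_ [_ [_ H4]]]].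
  apply: (cocycle_gens HG HbrG1 HE.1 (lin_comp Hp1a Hf1)).
  move=> a x b y c z; rewrite comp.
  have hs : in_span (fun s => exists x y, derived br y /\ s = sk x y) (sk z (br x y)).
    by apply: in_span1; exists z, (br x y); split => //; exact: derived_br.
  have := H4 a b c _ hs; rewrite (Fanti (b * c) a) (Fanti (c * a) b) (Fanti (a * b) c) => /negsum.
  have i1 := (H1 (b*c) a).2.2 x y z; have i2 := (H1 (c*a) b).2.2 z x y.
  rewrite /= in i1 i2.
  have e1 : F (b * c) a (br y z) x = F (b * c) a z (br x y).
    by rewrite Fsym /F -i1 HSk.2.1.
  have e2 : F (c * a) b (br z x) y = F (c * a) b z (br x y).
    by rewrite /F i2.
  move=> h; rewrite e1 e2 (Fsym _ _ (br x y)); exact: h.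
Qed.

Unset Implicit Arguments.
Set Strict Implicit.

Theorem corollary3p3
  (K : fieldType) (two_unit : (2 : K) != 0)
  (A : comAlgType K)
  (k : lmodType K) (br : k -> k -> k) (Hk : is_lie_bracket br)
  (Z : lmodType K)
  (* g = A ⊗ k, with tg a x = a ⊗ x = ax, and its Lie bracket *)
  (G : lmodType K) (tg : A -> k -> G) (HG : is_tensor tg)
  (brG : G -> G -> G) (HbrG1 : bilin brG)
  (HbrG2 : forall a x b y, brG (tg a x) (tg b y) = tg (a * b) (br x y))
  (* Λ²(g) *)
  (E : lmodType K) (wg : G -> G -> E) (HE : is_ext_square wg)
  (* Λ²(A), S²(k), Λ²(k), S²(A) *)
  (LA : lmodType K) (wA : A -> A -> LA) (HLA : is_ext_square wA)
  (Sk : lmodType K) (sk : k -> k -> Sk) (HSk : is_sym_square sk)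
  (Lk : lmodType K) (wk : k -> k -> Lk) (HLk : is_ext_square wk)
  (SA : lmodType K) (sA : A -> A -> SA) (HSA : is_sym_square sA)
  (* I_A = kernel of the multiplication S²(A) -> A, embedded by iota *)
  (mA : SA -> A) (HmA1 : linear mA) (HmA2 : forall a b, mA (sA a b) = a * b)
  (IA : lmodType K) (iota : IA -> SA) (Hiota1 : linear iota)
  (Hiota2 : injective iota) (Hiota3 : forall s, mA s = 0 <-> exists c, iota c = s)
  (* the three summands *)
  (T1 : lmodType K) (t1 : LA -> Sk -> T1) (HT1 : is_tensor t1)
  (T2 : lmodType K) (t2 : A -> Lk -> T2) (HT2 : is_tensor t2)
  (T3 : lmodType K) (t3 : IA -> Lk -> T3) (HT3 : is_tensor t3)
  (* the projections p_1, p_2, p_3 *)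
  (p1 : E -> T1) (Hp1a : linear p1)
  (Hp1b : forall a x b y, p1 (wg (tg a x) (tg b y)) = t1 (wA a b) (sk x y))
  (p2 : E -> T2) (Hp2a : linear p2)
  (Hp2b : forall a x b y, p2 (wg (tg a x) (tg b y)) = t2 (a * b) (wk x y))
  (p3 : E -> T3) (Hp3a : linear p3)
  (Hp3b : forall a x b y c, iota c = sA a b - sA (a * b) 1 ->
            p3 (wg (tg a x) (tg b y)) = t3 c (wk x y)) :
  (* i = 1 *)
  (forall f1 : T1 -> Z, linear f1 ->
     (is_2cocycle brG wg (fun e => f1 (p1 e)) <->
      ((forall a b,
          bilin (fun x y => f1 (t1 (wA a b) (sk x y))) /\
          (forall x y, f1 (t1 (wA a b) (sk x y)) = f1 (t1 (wA a b) (sk y x))) /\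
          lie_invariant br (fun x y => f1 (t1 (wA a b) (sk x y)))) /\
       cyclic_1cocycle_on
         (in_span (fun s => exists x y, derived br y /\ s = sk x y))
         (fun a b (s : Sk) => f1 (t1 (wA a b) s))))) /\
  (* i = 2 *)
  (forall f2 : T2 -> Z, linear f2 ->
     (is_2cocycle brG wg (fun e => f2 (p2 e)) <->
      (forall a : A, Z2 br (fun x y => f2 (t2 a (wk x y)))))) /\
  (* i = 3 *)
  (forall f3 : T3 -> Z, linear f3 ->
     (is_2cocycle brG wg (fun e => f3 (p3 e)) <->
      (forall (c : IA) (x y : k), derived br y -> f3 (t3 c (wk x y)) = 0))).
Proof.
Proof.
split; first exact: (part1 two_unit HG HbrG1 HbrG2 HE HLA HSk HT1 Hp1a Hp1b).
split; first exact: (part2 HG HbrG1 HbrG2 HE HLk HT2 Hp2a Hp2b).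
exact: (part3 two_unit HG HbrG1 HbrG2 HE HLk HSA HmA1 HmA2 Hiota1 Hiota2 Hiota3 HT3 Hp3a Hp3b).
Qed.
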